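(* Let $M\ge 2N-1$. For a generic $N$-dimensional subspace $W\subset\mathbb R^M$ (i.e. all $W$ in a Zariski open dense subset of the Grassmannian $Gr(N,M)$) the following holds: for every $S\subset\{1,\dots,M\}$ and every $u\in W$, one has $\sigma_S(u)\in W$ if and only if $\sigma_S(u)=\pm u$.
   Context: For $S\subset\{1,\dots,M\}$ with characteristic function $S(i)$ ($S(i)=1$ if $i\in S$, $0$ otherwise), $\sigma_S:\mathbb R^M\to\mathbb R^M$ is $\sigma_S(a_1,\dots,a_M)=((-1)^{S(1)}a_1,\dots,(-1)^{S(M)}a_M)$. *)

(* Defs.v *)
From HB Require Import structures.
From mathcomp Require Import all_boot all_order all_algebra.
From mathcomp Require Import reals.
From mathcomp Require Import mpoly.
Set Implicit Arguments. Unset Strict Implicit. Unset Printing Implicit Defensive.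
Import Order.TTheory GRing.Theory Num.Theory.
Local Open Scope ring_scope.

Definition sigma (R : ringType) (M : nat) (S : {set 'I_M}) (u : 'rV[R]_M) : 'rV[R]_M :=
  \row_i ((-1) ^+ (i \in S) * u 0 i).

Definition mxeval (R : comRingType) (N M : nat) (P : {mpoly R[N * M]}) (A : 'M[R]_(N, M)) : R :=
  P.@[fun k => mxvec A 0 k].

(* Main.v *)
Require Import Defs.
From HB Require Import structures.
From mathcomp Require Import all_boot all_order all_algebra.
From mathcomp Require Import reals.
From mathcomp Require Import mpoly.
From mathcomp Require Import zify.
Import Order.TTheory GRing.Theory Num.Theory.
Local Open Scope ring_scope.

Section Aux.
Variables (R : realType) (N M : nat).

Definition Xmx : 'M[{mpoly R[N * M]}]_(N, M) := \matrix_(i, j) 'X_(mxvec_index i j).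

Definition Pdet : {mpoly R[N * M]} :=
  \prod_(f : {ffun 'I_N -> 'I_M} | injectiveb f) \det (colsub f Xmx).

Lemma map_Xmx (A : 'M[R]_(N, M)) :
  map_mx (meval (fun k => mxvec A 0 k)) Xmx = A.
Proof.
apply/matrixP => i j; rewrite !mxE mevalXU mxvecE //.
Qed.

Lemma mxeval_Pdet (A : 'M[R]_(N, M)) :
  mxeval Pdet A = \prod_(f : {ffun 'I_N -> 'I_M} | injectiveb f) \det (colsub f A).
Proof.
rewrite /mxeval /Pdet rmorph_prod; apply: eq_bigr => f _.
rewrite -det_map_mx; congr (\det _).
by apply/matrixP => i j; rewrite !mxE /= mevalXU mxvecE.
Qed.

Lemma key (A : 'M[R]_(N, M)) (f : 'I_N -> 'I_M) (v : 'rV[R]_M) :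
  \det (colsub f A) != 0 -> (v <= A)%MS -> (forall k, v 0 (f k) = 0) -> v = 0.
Proof.
move=> hd /submxP [D ->] hv.
have hu : colsub f A \in unitmx by rewrite unitmxE unitfE.
have h0 : D *m colsub f A = 0.
  rewrite mulmx_colsub; apply/matrixP => i k; rewrite !mxE.
  by rewrite (ord1 i); move: (hv k); rewrite mxE.
have -> : D = 0 by rewrite -(mulmxK hu D) h0 mul0mx.
by rewrite mul0mx.
Qed.


Lemma inj_into (C : {set 'I_M}) : (N <= #|C|)%N ->
  exists f : 'I_N -> 'I_M, injective f /\ forall k, f k \in C.
Proof.
move=> h.
exists (fun k => @enum_val _ (mem C) (widen_ord h k)); split.
  move=> a b /enum_val_inj/(congr1 val) /= ab; exact: val_inj.
move=> k; exact: (@enum_valP _ (mem C)).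
Qed.

Definition V0 : 'M[R]_(N, M) := \matrix_(i, j) ((j : nat).+1%:R ^+ i).

Lemma V0_det (f : 'I_N -> 'I_M) : injective f -> \det (colsub f V0) != 0.
Proof.
move=> fi.
have -> : colsub f V0 = Vandermonde N (\row_k ((f k : nat).+1%:R : R)).
  by apply/matrixP => i j; rewrite !mxE.
rewrite det_Vandermonde; apply/prodf_neq0 => i _; apply/prodf_neq0 => j ij.
rewrite !mxE subr_eq0 eqr_nat eqSS; apply/negP => /eqP /val_inj /fi eji.
by move: ij; rewrite eji ltnn.
Qed.

Lemma Pdet_nz_inj (A : 'M[R]_(N, M)) : mxeval Pdet A != 0 ->
  forall f : 'I_N -> 'I_M, injective f -> \det (colsub f A) != 0.
Proof.
rewrite mxeval_Pdet => /prodf_neq0 h f fi.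
have := h (finfun f); rewrite (eq_colsub f); last by move=> x; rewrite ffunE.
apply; apply/injectiveP => x y; rewrite !ffunE; exact: fi.
Qed.

End Aux.
Arguments key {R N M}.
Arguments inj_into {N M}.
Arguments Pdet_nz_inj {R N M}.
Arguments V0_det {R N M}.
Arguments mxeval_Pdet {R N M}.

Theorem lemma2p3 (R : realType) (N M : nat) (hNM : (2 * N - 1 <= M)%N) :
  exists P : {mpoly R[N * M]}, P != 0 /\
    forall A : 'M[R]_(N, M), mxeval P A != 0 ->
      \rank A = N /\
      forall (S : {set 'I_M}) (u : 'rV[R]_M), (u <= A)%MS ->
        ((sigma S u <= A)%MS <-> (sigma S u = u \/ sigma S u = - u)).
Proof.
exists (Pdet R N M); split.
  apply/negP => /eqP h0; have := mxeval_Pdet (V0 R N M).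
  rewrite h0 /mxeval meval0 => /esym/eqP; apply/negP.
  apply/prodf_neq0 => f /injectiveP fi; exact: V0_det.
move=> A hA; have hf := Pdet_nz_inj A hA; split.
  apply/eqP; rewrite eqn_leq rank_leq_row /=.
  case: N hNM A hA hf => [|n] hNM' A hA hf //.
  have [|f [fi _]] := @inj_into n.+1 M setT; first by rewrite cardsT card_ord; lia.
  have hu : colsub f A \in unitmx by rewrite unitmxE unitfE; exact: hf.
  apply: leq_trans (mxrankM_maxl A (colsub f 1%:M)).
  by rewrite mulmx_colsub mulmx1 (mxrank_unit hu).
move=> S u hu; split; last first.
  by case=> ->; [ | rewrite -scaleN1r scalemx_sub].
move=> hs.
have hsN : (- sigma S u <= A)%MS by rewrite -scaleN1r scalemx_sub.
have [hC|hC] := leqP N #|~: S|.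
  have [f [fi fC]] := inj_into _ hC.
  left; apply/esym/subr0_eq; apply: (key _ _ _ (hf f fi)); first exact: addmx_sub.
  move=> k; move: (fC k); rewrite in_setC => /negbTE hk.
  by rewrite !mxE hk expr0 mul1r subrr.
have hS : (N <= #|S|)%N by have := cardsC S; rewrite card_ord; lia.
have [f [fi fS]] := inj_into _ hS.
right; have h0 : u + sigma S u = 0.
  apply: (key _ _ _ (hf f fi)); first exact: addmx_sub.
  by move=> k; rewrite !mxE fS expr1 mulN1r subrr.
have -> : sigma S u = (u + sigma S u) - u by rewrite addrAC subrr add0r.
by rewrite h0 sub0r.
Qed.
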